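(* Fix $\lambda_s>0,\lambda>0$, $\alpha\in[0,1]$ and constants $0<c_1\le c_2$. For each $n\ge3$ let $\tilde n(n)$ be an integer with $1\le\tilde n(n)\le n$ and $c_1n^\alpha\le\tilde n(n)\le c_2 n^\alpha$. Then there exist $C>0$ and $N$ such that for all $n\ge N$ and every choice of $\tilde n(n)$ distinct jammed links of the ring $R(n)$, the average age $\Delta^{\ell}$ of the jammed ring satisfies $$\Delta^\ell\ge\begin{cases}C\,n^{\alpha}, & \alpha\ge \tfrac12,\\ C\sqrt n, & \alpha<\tfrac12.\end{cases}$$
   Context: Version-age model. A gossip network on a finite node set $\mathcal N$ is specified by source rates $\lambda_{0j}>0$ ($j\in\mathcal N$) and gossip rates $\lambda_{ij}\ge 0$ for ordered pairs $i\neq j$ ($\lambda_{ij}$ is the rate at which node $i$ sends updates to node $j$); $\lambda_s>0$ is the source's update rate. For nonempty $S\subseteq\mathcal N$ let $N(S)=\{i\in\mathcal N\setminus S:\ \sum_{j\in S}\lambda_{ij}>0\}$, and define the version ages recursively by $$\Delta_S=\frac{\lambda_s+\sum_{i\in N(S)}\big(\sum_{j\in S}\lambda_{ij}\big)\Delta_{S\cup\{i\}}}{\sum_{j\in S}\lambda_{0j}+\sum_{i\in N(S)}\sum_{j\in S}\lambda_{ij}}$$ (well defined by downward induction on $|S|$); $\Delta_i=\Delta_{\{i\}}$. Ring $R(n)$: nodes $\{1,\dots,n\}$, $\lambda_{0j}=\lambda/n$, and for each of the $n$ ring links $\{i,i+1\}$ (indices mod $n$) $\lambda_{i,i+1}=\lambda_{i+1,i}=\lambda/2$;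 all other rates $0$. Jamming $\tilde n$ distinct ring links means setting both rates of each of these links to $0$ (the ring then splits into $\tilde n$ line segments). The average age of the jammed ring is $\Delta^\ell=\frac1n\sum_{i=1}^n\Delta_i$ computed in the jammed network. *)

(* Defs.v *)
From HB Require Import structures.
From mathcomp Require Import all_boot all_order all_algebra.
From mathcomp Require Import all_classical all_reals all_analysis.
Set Implicit Arguments. Unset Strict Implicit. Unset Printing Implicit Defensive.
Import Order.TTheory GRing.Theory Num.Theory.
Local Open Scope ring_scope.

Section VersionAge.
Variables (R : realType) (T : finType).
(* lam0 j = source rate to j; lam i j = gossip rate from i to j; ls = source update rate *)
Variables (lam0 : T -> R) (lam : T -> T -> R) (ls : R).

Definition nbr (S : {set T}) : {set T} :=
  [set i | (i \notin S) && (0 < \sum_(j in S) lam i j)].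

(* fuel-indexed unfolding of the recursion; fuel = #|T| - #|S| *)
Fixpoint ageF (k : nat) (S : {set T}) : R :=
  match k with
  | 0 => ls / (\sum_(j in S) lam0 j) (* only reached when S = T, where N(S) is empty *)
  | k.+1 => (ls + \sum_(i in nbr S) (\sum_(j in S) lam i j) * ageF k (i |: S))
            / (\sum_(j in S) lam0 j + \sum_(i in nbr S) \sum_(j in S) lam i j)
  end.

Definition version_age (S : {set T}) : R := ageF (#|T| - #|S|) S.
End VersionAge.

(* Ring R(n) on nodes 'I_n; link i is {i, i+1 mod n}; J = set of jammed links *)
Definition ring_lam0 (R : realType) (n : nat) (l : R) : 'I_n -> R :=
  fun _ => l / n%:R.

Definition jammed_ring_lam (R : realType) (n : nat) (l : R) (J : {set 'I_n})
  : 'I_n -> 'I_n -> R :=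
  fun i j =>
    if (j == ordS i) && (i \notin J) then l / 2
    else if (i == ordS j) && (j \notin J) then l / 2
    else 0.

Definition jammed_ring_avg_age (R : realType) (n : nat) (ls l : R) (J : {set 'I_n}) : R :=
  n%:R^-1 * \sum_(i < n) version_age (@ring_lam0 R n l) (jammed_ring_lam l J) ls [set i].

(* Main.v *)
Require Import Defs.
From HB Require Import structures.
From mathcomp Require Import all_boot all_order all_algebra.
From mathcomp Require Import all_classical all_reals all_analysis.
From mathcomp Require Import lra ring.
Import Order.TTheory GRing.Theory Num.Theory.
Set Implicit Arguments. Unset Strict Implicit. Unset Printing Implicit Defensive.
Local Open Scope ring_scope.
Lemma ageF_lb (R : realType) (T : finType) (lam0 : T -> R) (lam : T -> T -> R) (ls : R)
 (P : {set T} -> Prop) (B : {set T} -> R) :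
 (forall S, P S -> forall i, i \in nbr lam S -> P (i |: S)) ->
 (forall S (a : T -> R), P S -> (forall i, i \in nbr lam S -> B (i |: S) <= a i) ->
    B S <= (ls + \sum_(i in nbr lam S) (\sum_(j in S) lam i j) * a i) /
      (\sum_(j in S) lam0 j + \sum_(i in nbr lam S) \sum_(j in S) lam i j)) ->
 forall k S, P S -> k = (#|T| - #|S|)%N -> B S <= ageF lam0 lam ls k S.
Proof.
move=> Hp Hs; elim=> [|k IH] S PS Hk /=.
- have ST : S = [set: T].
    apply/eqP; rewrite eqEcard finset.subsetT finset.cardsT /=.
    by move: Hk => /esym/eqP; rewrite subn_eq0.
  have nb : nbr lam S = finset.set0 by apply/setP=> i; rewrite !inE ST finset.in_setT.
  have := Hs S (fun _ => 0) PS; rewrite nb !big_set0 !addr0; apply.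
  by move=> i; rewrite finset.in_set0.
- apply: (Hs _ _ PS) => i Hi; apply: IH (Hp _ PS _ Hi) _.
  move: Hi; rewrite inE => /andP[iS _].
  by rewrite cardsU1 iS add1n subnS -Hk.
Qed.

Lemma lamJ_cases (R : realType) n (l : R) (J : {set 'I_n}) x y :
  jammed_ring_lam l J x y = 0 \/ jammed_ring_lam l J x y = l / 2.
Proof. rewrite /jammed_ring_lam; case: ifP => _; [by right|]; case: ifP; by [right|left]. Qed.

Lemma lamJ_ge0 (R : realType) n (l : R) (J : {set 'I_n}) x y :
  0 <= l -> 0 <= jammed_ring_lam l J x y.
Proof. by move=> l0; case: (lamJ_cases l J x y) => ->; lra. Qed.

Lemma lamJ_sym (R : realType) n (l : R) (J : {set 'I_n}) x y :
  jammed_ring_lam l J x y = jammed_ring_lam l J y x.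
Proof.
rewrite /jammed_ring_lam.
by case: ((y == ordS x) && (x \notin J)); case: ((x == ordS y) && (y \notin J)).
Qed.

Lemma sum_eq1 (R : realType) (T : finType) (a : T) :
  \sum_(x : T) ((x == a)%:R : R) = 1.
Proof.
rewrite (bigD1 a) //= eqxx big1 ?addr0 // => x /negbTE -> //.
Qed.

Lemma lamJ_sum (R : realType) n (l : R) (J : {set 'I_n}) x :
  0 <= l -> \sum_y jammed_ring_lam l J y x <= l.
Proof.
move=> l0.
have H : forall y, jammed_ring_lam l J y x <=
   l / 2 * (y == ord_pred x)%:R + l / 2 * (y == ordS x)%:R.
  move=> y; rewrite /jammed_ring_lam.
  case: ifP => [/andP[/eqP -> _]|_]; first by rewrite ordSK eqxx /=; case: (_ == _) => /=; lra.
  case: ifP => [/andP[/eqP -> _]|_]; first by rewrite eqxx /=; case: (_ == _) => /=; lra.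
  by case: (_ == _); case: (_ == _) => /=; lra.
apply: le_trans (ler_sum _ (fun y _ => H y)) _.
by rewrite big_split /= -!mulr_sumr !sum_eq1; lra.
Qed.

Lemma lamJ_pos (R : realType) n (l : R) (J : {set 'I_n}) (S : {set 'I_n}) i :
  0 <= l -> 0 < \sum_(j in S) jammed_ring_lam l J i j -> l / 2 <= \sum_(j in S) jammed_ring_lam l J i j.
Proof.
move=> l0 hpos.
case: (pickP [pred j in S | jammed_ring_lam l J i j != 0]) => [j /andP[jS nz] | H].
- rewrite (bigD1 j) //=.
  have -> : jammed_ring_lam l J i j = l / 2 by case: (lamJ_cases l J i j) nz => -> //; rewrite eqxx.
  rewrite lerDl sumr_ge0 // => k _; exact: lamJ_ge0.
- move: hpos; rewrite big1 ?ltxx // => k kS.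
  by move: (H k); rewrite /= kS /= => /negbFE/eqP.
Qed.

Lemma sum_sub_le (R : realType) (T : finType) (A : {set T}) (F : T -> R) :
  (forall x, 0 <= F x) -> \sum_(x in A) F x <= \sum_x F x.
Proof.
move=> F0; rewrite [X in _ <= X](bigID (mem A)) /= lerDl sumr_ge0 //.
Qed.

Definition Wset (R : realType) n (l : R) (J : {set 'I_n}) (S : {set 'I_n}) : R :=
  \sum_(x in ~: S) \sum_(j in S) jammed_ring_lam l J x j.

Lemma W_step (R : realType) n (l : R) (J : {set 'I_n}) (S : {set 'I_n}) i :
  0 <= l -> i \in nbr (jammed_ring_lam l J) S -> Wset l J (i |: S) <= Wset l J S.
Proof.
move=> l0; rewrite inE => /andP[iS apos].
set lam := jammed_ring_lam l J.
set a := \sum_(j in S) lam i j.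
have ha : l / 2 <= a by apply: lamJ_pos.
set Wr := \sum_(x in ~: (i |: S)) \sum_(j in S) lam x j.
have E1 : Wset l J S = a + Wr.
  rewrite /Wset (bigD1 i) /=; last by rewrite inE.
  congr (_ + _); apply: eq_bigl => x; rewrite !inE negb_or andbC //.
have E2 : Wset l J (i |: S) = Wr + \sum_(x in ~: (i |: S)) lam x i.
  rewrite /Wset -big_split /=; apply: eq_bigr => x _; rewrite big_setU1 //= addrC //.
have E3 : \sum_(x in ~: (i |: S)) lam x i + a <= l.
  apply: le_trans (lamJ_sum J i l0).
  rewrite [X in _ <= X](bigID (mem (~: (i |: S)))) /= lerD2l.
  have -> : a = \sum_(x in S) lam x i by apply: eq_bigr => x _; rewrite /lam lamJ_sym.
  rewrite [X in _ <= X](eq_bigl (mem (i |: S))); last by move=> x; rewrite /= finset.in_setC negbK.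
  rewrite big_setU1 //= lerDr; exact: lamJ_ge0.
rewrite E1 E2; lra.
Qed.

Lemma W_init (R : realType) n (l : R) (J : {set 'I_n}) i :
  0 <= l -> Wset l J [set i] <= l.
Proof.
move=> l0; rewrite /Wset.
under eq_bigr => x _ do rewrite big_set1.
apply: le_trans (lamJ_sum J i l0).
apply: sum_sub_le => x; exact: lamJ_ge0.
Qed.

Lemma nbr_W (R : realType) n (l : R) (J : {set 'I_n}) (S : {set 'I_n}) :
  0 <= l -> \sum_(i in nbr (jammed_ring_lam l J) S) \sum_(j in S) jammed_ring_lam l J i j <= Wset l J S.
Proof.
move=> l0; rewrite /Wset [X in _ <= X](bigID (mem (nbr (jammed_ring_lam l J) S))) /=.
rewrite [X in _ <= X + _](eq_bigl (mem (nbr (jammed_ring_lam l J) S))); last first.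
  move=> x /=; case Hx: (x \in nbr _ _); rewrite ?andbF ?andbT //.
  by move: Hx; rewrite inE finset.in_setC => /andP[].
rewrite lerDl sumr_ge0 // => x _; rewrite sumr_ge0 // => j _; exact: lamJ_ge0.
Qed.

Definition gfun (R : realType) (K u : R) (k : nat) : R :=
  if k%:R <= K then u / 2 * (K - k%:R) else 0.

Lemma g_ge0 (R : realType) (K u : R) k : 0 <= u -> 0 <= gfun K u k.
Proof. by move=> u0; rewrite /gfun; case: ifP => h //; nra. Qed.

Lemma g_step (R : realType) (K u : R) k : 0 <= u -> gfun K u k <= gfun K u k.+1 + u / 2.
Proof.
move=> u0; rewrite /gfun.
have e : (k.+1)%:R = k%:R + 1 :> R by rewrite -natr1.
rewrite e; case: ifP => h1; case: ifP => h2; try nra.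
Qed.

Lemma g_s (R : realType) (K u l m : R) k : 0 <= u -> 0 <= l -> 0 < m -> 0 <= K -> K ^+ 2 = m ->
  gfun K u k * (k%:R * (l / m)) <= u * l / 2.
Proof.
move=> u0 l0 m0 K0 Km; rewrite /gfun; case: ifP => h; last by rewrite mul0r; nra.
have k0 : 0 <= k%:R :> R by rewrite ler0n.
have hk : (K - k%:R) * k%:R <= m by rewrite -Km; nra.
have hk1 : (K - k%:R) * k%:R / m <= 1 by rewrite ler_pdivrMr // mul1r.
have -> : u / 2 * (K - k%:R) * (k%:R * (l / m)) = (u * l / 2) * ((K - k%:R) * k%:R / m).
  by field; rewrite gt_eqF.
have ul : 0 <= u * l / 2 by nra.
rewrite -[X in _ <= X]mulr1; apply: ler_wpM2l => //.
Qed.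

Lemma nbr_notin (R : realType) (T : finType) (lam : T -> T -> R) S i :
  i \in nbr lam S -> i \notin S.
Proof. by rewrite inE => /andP[]. Qed.

Lemma sqrt_bound (R : realType) n (ls l : R) (J : {set 'I_n}) (K : R) :
  0 < ls -> 0 < l -> (0 < n)%N -> 0 <= K -> K ^+ 2 = n%:R ->
  forall S : {set 'I_n}, S != finset.set0 -> Wset l J S <= l ->
  gfun K (ls / l) #|S| <= ageF (ring_lam0 l) (jammed_ring_lam l J) ls (n - #|S|) S.
Proof.
move=> ls0 l0 n0 K0 Kn S SN SW.
set u := ls / l.
have u0 : 0 <= u by rewrite /u divr_ge0 // ltW.
have ul : u * l = ls by rewrite /u divfK // gt_eqF.
have m0 : 0 < n%:R :> R by rewrite ltr0n.
apply: (@ageF_lb R _ (ring_lam0 l) (jammed_ring_lam l J) ls (fun S => S != finset.set0 /\ Wset l J S <= l) (fun S => gfun K u #|S|)); last first.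
- by rewrite card_ord.
- by split.
- move=> S' a [S'N S'W] Ha.
  set k := #|S'|.
  set W' := \sum_(i in nbr _ S') \sum_(j in S') _.
  have W'l : W' <= l := le_trans (nbr_W J S' (ltW l0)) S'W.
  have W'0 : 0 <= W' by rewrite sumr_ge0 // => i _; rewrite sumr_ge0 // => j _; exact: lamJ_ge0 (ltW l0).
  have hs : \sum_(j in S') ring_lam0 l j = k%:R * (l / n%:R) by rewrite sumr_const /ring_lam0 mulr_natl.
  have k1 : 1 <= k%:R :> R.
    rewrite ler1n; case/set0Pn: S'N => x xS; apply/card_gt0P; by exists x.
  have hsum : W' * gfun K u k.+1 <= \sum_(i in nbr (jammed_ring_lam l J) S') (\sum_(j in S') jammed_ring_lam l J i j) * a i.
    rewrite /W' big_distrl /=; apply: ler_sum => i Hi; apply: ler_wpM2l.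
      by rewrite sumr_ge0 // => j _; exact: lamJ_ge0 (ltW l0).
    by have := Ha i Hi; rewrite cardsU1 (nbr_notin Hi).
  have s0 : 0 < k%:R * (l / n%:R) by apply: mulr_gt0; [lra | rewrite divr_gt0].
  rewrite hs ler_pdivlMr; last by lra.
  have h1 := g_step K k u0.
  have h2 := g_s k u0 (ltW l0) m0 K0 Kn.
  have h3 := g_ge0 K k.+1 u0.
  have p1 : gfun K u k * W' <= (gfun K u k.+1 + u / 2) * W' by apply: ler_wpM2r.
  have p2 : u / 2 * W' <= u / 2 * l by apply: ler_wpM2l => //; lra.
  rewrite mulrDr; rewrite ul in h2; nra.
- move=> S' [S'N S'W] i Hi; split.
    by apply/set0Pn; exists i; rewrite setU11.
  exact: le_trans (W_step (ltW l0) Hi) S'W.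
Qed.

Lemma iter_ordS n (i : 'I_n) k : val (iter k (@ordS n) i) = ((i + k) %% n)%N.
Proof.
elim: k => [|k IH] /=; first by rewrite addn0 modn_small.
by rewrite IH addnS -[((_ %% n).+1)%N]addn1 modnDml addn1.
Qed.

Lemma reach n (J : {set 'I_n}) j0 (Hj : j0 \in J) (i : 'I_n) :
  exists k, iter k (@ordS n) i \in J.
Proof.
exists (j0 + n - i)%N.
suff -> : iter (j0 + n - i) (@ordS n) i = j0 by [].
apply: val_inj; rewrite iter_ordS subnKC; last by apply: leq_trans (ltnW (ltn_ord i)) (leq_addl _ _).
by rewrite modnDr modn_small.
Qed.

Definition dist n (J : {set 'I_n}) j0 (Hj : j0 \in J) (i : 'I_n) := ex_minn (reach Hj i).
Definition rr n (J : {set 'I_n}) j0 (Hj : j0 \in J) (i : 'I_n) := iter (dist Hj i) (@ordS n) i.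

Lemma rr_in n (J : {set 'I_n}) j0 (Hj : j0 \in J) i : rr Hj i \in J.
Proof. by rewrite /rr /dist; case: ex_minnP. Qed.

Lemma rr_J n (J : {set 'I_n}) j0 (Hj : j0 \in J) i : i \in J -> rr Hj i = i.
Proof.
move=> iJ; rewrite /rr /dist; case: ex_minnP => m _ min.
by have := min 0%N iJ; rewrite leqn0 => /eqP ->.
Qed.

Lemma rr_S n (J : {set 'I_n}) j0 (Hj : j0 \in J) i : i \notin J -> rr Hj (ordS i) = rr Hj i.
Proof.
move=> iJ; rewrite /rr /dist.
case: ex_minnP => m' Pm' min'; case: ex_minnP => m Pm min.
have : (m <= m'.+1)%N by apply: min; rewrite iterSr.
case: m Pm min => [|m0] Pm min; first by rewrite /= (negbTE iJ) in Pm.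
rewrite ltnS => le1.
have le2 : (m' <= m0)%N by apply: min'; rewrite -iterSr.
have -> : m' = m0 by apply/eqP; rewrite eqn_leq le1 le2.
by rewrite iterSr.
Qed.

Lemma rr_adj (R : realType) n (l : R) (J : {set 'I_n}) j0 (Hj : j0 \in J) x y :
  jammed_ring_lam l J x y != 0 -> rr Hj x = rr Hj y.
Proof.
rewrite /jammed_ring_lam.
case: ifP => [/andP[/eqP -> xJ] _|_]; first by rewrite rr_S.
case: ifP => [/andP[/eqP -> yJ] _|_]; first by rewrite rr_S.
by rewrite eqxx.
Qed.

Lemma count_fib (R : realType) (T : finType) (J : {set T}) (r : T -> T) :
  (forall i, r i \in J) -> (forall j, j \in J -> r j = j) ->
  \sum_i (#|[set y | r y == r i]|%:R : R)^-1 = #|J|%:R.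
Proof.
move=> rin rJ.
rewrite (partition_big r (mem J)) //=.
transitivity (\sum_(j in J) (1:R)); last by rewrite sumr_const.
apply: eq_bigr => j jJ.
rewrite (eq_bigr (fun _ => (#|[set y | r y == j]|%:R : R)^-1)); last by move=> i /eqP ->.
rewrite sumr_const.
have -> : #|[pred i | r i == j]| = #|[set y | r y == j]| by apply: eq_card => y; rewrite inE.
have : (0 < #|[set y | r y == j]|)%N by apply/card_gt0P; exists j; rewrite inE rJ.
move: #|_| => N N0.
have -> : (N%:R : R)^-1 *+ N = (N%:R)^-1 * N%:R by rewrite mulr_natr.
by rewrite mulVf // pnatr_eq0 -lt0n.
Qed.

Lemma comp_bound (R : realType) n (ls l : R) (J : {set 'I_n}) (A : {set 'I_n}) :
  0 < ls -> 0 < l -> (0 < n)%N ->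
  (forall x y, x \notin A -> y \in A -> jammed_ring_lam l J x y = 0) ->
  forall S : {set 'I_n}, S != finset.set0 -> S \subset A ->
  ls / (#|A|%:R * (l / n%:R)) <= ageF (ring_lam0 l) (jammed_ring_lam l J) ls (n - #|S|) S.
Proof.
move=> ls0 l0 n0 clA S SN SA.
have m0 : 0 < n%:R :> R by rewrite ltr0n.
set M := #|A|%:R * (l / n%:R).
apply: (@ageF_lb R _ (ring_lam0 l) (jammed_ring_lam l J) ls (fun S => S != finset.set0 /\ S \subset A) (fun _ => ls / M)); last first.
- by rewrite card_ord.
- by split.
- move=> S' a [S'N S'A] Ha.
  set k := #|S'|.
  set W' := \sum_(i in nbr _ S') \sum_(j in S') _.
  have W'0 : 0 <= W' by rewrite sumr_ge0 // => i _; rewrite sumr_ge0 // => j _; exact: lamJ_ge0 (ltW l0).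
  have hs : \sum_(j in S') ring_lam0 l j = k%:R * (l / n%:R) by rewrite sumr_const /ring_lam0 mulr_natl.
  have k1 : 1 <= k%:R :> R.
    rewrite ler1n; case/set0Pn: S'N => x xS; apply/card_gt0P; by exists x.
  have kA : k%:R <= #|A|%:R :> R by rewrite ler_nat; apply: subset_leq_card.
  have ln0 : 0 < l / n%:R by rewrite divr_gt0.
  have M0 : 0 < M by rewrite /M; apply: mulr_gt0 => //; lra.
  have sM : k%:R * (l / n%:R) <= M by rewrite /M ler_wpM2r //; lra.
  have B0 : 0 <= ls / M by rewrite divr_ge0 // ltW.
  have hsum : W' * (ls / M) <= \sum_(i in nbr (jammed_ring_lam l J) S') (\sum_(j in S') jammed_ring_lam l J i j) * a i.
    rewrite /W' big_distrl /=; apply: ler_sum => i Hi; apply: ler_wpM2l; last exact: Ha.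
    by rewrite sumr_ge0 // => j _; exact: lamJ_ge0 (ltW l0).
  have s0 : 0 < k%:R * (l / n%:R) by apply: mulr_gt0; [lra | rewrite divr_gt0].
  rewrite hs ler_pdivlMr; last by lra.
  have p1 : ls / M * (k%:R * (l / n%:R)) <= ls / M * M by apply: ler_wpM2l.
  rewrite divfK ?gt_eqF // in p1.
  rewrite mulrDr; nra.
- move=> S' [S'N S'A] i Hi; split.
    by apply/set0Pn; exists i; rewrite setU11.
  rewrite finset.subUset S'A andbT finset.sub1set.
  apply/negPn/negP => iA.
  move: Hi; rewrite inE => /andP[_].
  rewrite big1 ?ltxx // => j jS; by apply: clA iA (fintype.subsetP S'A j jS).
Qed.

Lemma avg_comp (R : realType) n (ls l : R) (J : {set 'I_n}) j0 (Hj : j0 \in J) :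
  0 < ls -> 0 < l -> (0 < n)%N ->
  ls / l * #|J|%:R <= jammed_ring_avg_age ls l J.
Proof.
move=> ls0 l0 n0.
have m0 : 0 < n%:R :> R by rewrite ltr0n.
set A := fun i => [set y | rr Hj y == rr Hj i].
have H : forall i, ls / l * n%:R * (#|A i|%:R)^-1 <=
    version_age (ring_lam0 l) (jammed_ring_lam l J) ls [set i].
  move=> i.
  have cA : (0 < #|A i|)%N by apply/card_gt0P; exists i; rewrite inE.
  have cA' : 0 < #|A i|%:R :> R by rewrite ltr0n.
  have := @comp_bound R n ls l J (A i) ls0 l0 n0 _ [set i] _ _.
  rewrite /version_age card_ord.
  have -> : ls / (#|A i|%:R * (l / n%:R)) = ls / l * n%:R * (#|A i|%:R)^-1.
    by field; rewrite !gt_eqF.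
  apply.
  - move=> x y xA yA; apply/eqP; apply: contraNT xA => nz.
    by rewrite inE (rr_adj Hj nz); rewrite inE in yA.
  - by apply/set0Pn; exists i; rewrite set11.
  - by rewrite finset.sub1set inE.
rewrite /jammed_ring_avg_age.
apply: le_trans (ler_wpM2l _ (ler_sum _ (fun i _ => H i))); last by rewrite invr_ge0 ltW.
rewrite -mulr_sumr /A (@count_fib R _ J (rr Hj)); last 2 first.
- exact: rr_in.
- exact: rr_J.
rewrite le_eqVlt; apply/orP; left; apply/eqP; field; by rewrite !gt_eqF.
Qed.

Lemma avg_sqrt (R : realType) n (ls l : R) (J : {set 'I_n}) :
  0 < ls -> 0 < l -> (4 <= n)%N ->
  ls / l / 4 * Num.sqrt n%:R <= jammed_ring_avg_age ls l J.
Proof.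
move=> ls0 l0 n4.
have n0 : (0 < n)%N by apply: leq_trans n4.
have m0 : 0 < n%:R :> R by rewrite ltr0n.
have m4 : 4 <= n%:R :> R by rewrite (ler_nat R 4).
set K := Num.sqrt n%:R.
have K0 : 0 <= K by apply: sqrtr_ge0.
have Kn : K ^+ 2 = n%:R by apply: sqr_sqrtr; lra.
have K2 : 2 <= K by nra.
set u := ls / l.
have u0 : 0 < u by rewrite divr_gt0.
have H : forall i : 'I_n, gfun K u 1 <= version_age (ring_lam0 l) (jammed_ring_lam l J) ls [set i].
  move=> i.
  have := @sqrt_bound R n ls l J K ls0 l0 n0 K0 Kn [set i] _ (W_init J i (ltW l0)).
  rewrite /version_age card_ord cards1; apply.
  by apply/set0Pn; exists i; rewrite set11.
rewrite /jammed_ring_avg_age.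
apply: le_trans (ler_wpM2l _ (ler_sum _ (fun i _ => H i))); last by rewrite invr_ge0 ltW.
rewrite sumr_const card_ord -[gfun K u 1 *+ n]mulr_natr mulrCA mulVf ?gt_eqF // mulr1.
rewrite /gfun ifT; last by lra.
nra.
Qed.

Theorem theorem3 (R : realType) (ls l alpha c1 c2 : R) (nt : nat -> nat) :
  0 < ls -> 0 < l -> 0 <= alpha <= 1 -> 0 < c1 -> c1 <= c2 ->
  (forall n : nat, (3 <= n)%N ->
     [/\ (1 <= nt n)%N, (nt n <= n)%N,
         c1 * (n%:R `^ alpha) <= (nt n)%:R & (nt n)%:R <= c2 * (n%:R `^ alpha)]) ->
  exists C : R, 0 < C /\ exists N : nat, forall n : nat, (N <= n)%N ->
    forall J : {set 'I_n}, #|J| = nt n ->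
      (if 1 / 2 <= alpha then C * (n%:R `^ alpha) else C * Num.sqrt (n%:R))
        <= @jammed_ring_avg_age R n ls l J.
Proof.
move=> ls0 l0 _ c10 _ Hnt.
have u0 : 0 < ls / l by rewrite divr_gt0.
exists (if 1 / 2 <= alpha then ls / l * c1 else ls / l / 4); split.
  by case: ifP => _; [rewrite mulr_gt0 | rewrite divr_gt0].
exists 4%N => n n4 J HJ.
have n3 : (3 <= n)%N by apply: leq_trans n4.
have n0 : (0 < n)%N by apply: leq_trans n4.
have [h1 h2 h3 h4] := Hnt n n3.
case: ifP => Ha; rewrite Ha; last exact: avg_sqrt ls0 l0 n4.
have : (0 < #|J|)%N by rewrite HJ.
case/card_gt0P => j0 Hj.
apply: le_trans (avg_comp Hj ls0 l0 n0).
rewrite HJ -mulrA; apply: ler_wpM2l => //; exact: ltW.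
Qed.
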